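(* In the setting of the addition algorithm, for every $\varphi\in\mathbb{R}^V$: $\tau(v)=\tau_1(v,\cdot)\ge\tau_2(v,\cdot)\ge\cdots\ge\tau_{|V|}(v,\cdot)\ge0$ pointwise for every $v\in V$; $s_k\in[0,\tau(P_k)]$ for $1\le k\le|V|$; and $s_1\le s_2\le\cdots\le s_{|V|}$. In particular $0\le T^+(\varphi)_v-\varphi_v=\varphi_v-T^-(\varphi)_v\le\tau(v)$ for all $v$.
   Context: Addition algorithm. Let $G=(V,E)$ be a finite connected graph ($v\sim w$ means $(v,w)\in E$), $\tau:V\to[0,\infty)$, $0<\varepsilon\le1/2$, and fix a total order $\preceq$ on $V$. Let $f:\mathbb{R}\to\mathbb{R}$ be $f(x)=0$ for $|x|\ge1$, $f(x)=(1+x)/\varepsilon$ on $[-1,-1+\varepsilon]$, $f(x)=1$ on $[-1+\varepsilon,1-\varepsilon]$, $f(x)=(1-x)/\varepsilon$ on $[1-\varepsilon,1]$. For $v\in V$, $h,t\in\mathbb{R}$ let $m_{v,h,t}(h')=\min(\tau(v)-t,\varepsilon/2)f(h'-h)+t$ if $\tau(v)\ge t$, and $m_{v,h,t}(h')=t$ if $\tau(v)<t$. On input $\varphi\in\mathbb{R}^V$ the algorithm outputs an ordering $P_1,\dots,P_{|V|}$ of $V$, numbers $s_k$ and functions $\tau_k:V\times\mathbb{R}\to\mathbb{R}$: set $\tau_1(v,h)=\tau(v)$; for $k=1,\dots,|V|$: let $P_k$ be the vertex $v\in V\setminus\{P_1,\dots,P_{k-1}\}$ minimizing $\tau_k(v,\varphi_v)$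 (ties broken by taking the $\preceq$-smallest); set $s_k=\tau_k(P_k,\varphi_{P_k})$; if $k<|V|$ set $\tau_{k+1}(v,h)=\tau_k(v,h)$ if $v\in\{P_1,\dots,P_k\}$ or $v\not\sim P_k$, and $\tau_{k+1}(v,h)=\min(\tau_k(v,h),m_{v,\varphi_{P_k},s_k}(h))$ otherwise. Define $T^+(\varphi)_{P_k}=\varphi_{P_k}+s_k$ ($1\le k\le|V|$) and $T^-(\varphi)=2\varphi-T^+(\varphi)$. *)

(* Defs.v *)
From HB Require Import structures.
From mathcomp Require Import all_boot all_order all_algebra.
Set Implicit Arguments. Unset Strict Implicit. Unset Printing Implicit Defensive.
Import Order.TTheory GRing.Theory Num.Theory.
Local Open Scope ring_scope.

Section Addition.
Variables (R : realFieldType) (V : finType) (e : rel V) (tau : V -> R)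
          (eps : R) (le : rel V) (phi : V -> R).

Definition fbump (x : R) : R :=
  if 1 <= `|x| then 0
  else if x <= -1 + eps then (1 + x) / eps
  else if x <= 1 - eps then 1
  else (1 - x) / eps.

Definition mfun (v : V) (h t h' : R) : R :=
  if t <= tau v then Num.min (tau v - t) (eps / 2) * fbump (h' - h) + t
  else t.

(* state after some steps: chosen vertices P_1..P_k, values s_1..s_k,
   and the current function tau_{k+1} *)
Record alg_state := AlgState {
  chosen : seq V;
  svals : seq R;
  tauf : V -> R -> R }.

Definition init_state : alg_state := AlgState [::] [::] (fun v _ => tau v).

Definition select (tk : V -> R -> R) (P : seq V) : option V :=
  [pick v | (v \notin P) &&
     [forall w, (w \notin P) ==>
        ((tk v (phi v) < tk w (phi w)) ||
         ((tk v (phi v) == tk w (phi w)) && le v w))]].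

Definition step (st : alg_state) : alg_state :=
  match select (tauf st) (chosen st) with
  | None => st
  | Some p =>
      let s := tauf st p (phi p) in
      let P' := rcons (chosen st) p in
      AlgState P' (rcons (svals st) s)
        (fun v h => if (v \in P') || ~~ e v p then tauf st v h
                    else Num.min (tauf st v h) (mfun v (phi p) s h))
  end.

Definition final_state : alg_state := iter #|V| step init_state.

(* tau_k, for k >= 1 *)
Definition tau_k (k : nat) : V -> R -> R := tauf (iter k.-1 step init_state).

(* P_k and s_k, for 1 <= k <= |V| *)
Definition P_k (v0 : V) (k : nat) : V := nth v0 (chosen final_state) k.-1.
Definition s_k (k : nat) : R := nth 0 (svals final_state) k.-1.

Definition Tplus (v : V) : R :=
  phi v + nth 0 (svals final_state) (index v (chosen final_state)).
Definition Tminus (v : V) : R := 2 * phi v - Tplus v.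

End Addition.

(* Main.v *)
Require Import Defs.
From mathcomp Require Import all_boot all_order all_algebra.
From mathcomp Require Import lra.
Import Order.TTheory GRing.Theory Num.Theory.
Local Open Scope ring_scope.

Section Helpers.
Variables (R : realFieldType) (V : finType) (e : rel V) (tau : V -> R)
          (eps : R) (le : rel V) (phi : V -> R).
Hypothesis tau_ge0 : forall v, 0 <= tau v.
Hypothesis eps_gt0 : 0 < eps.
Hypothesis leT : transitive le.
Hypothesis leTot : total le.
Lemma lerefl a : le a a.
Proof. by move: (leTot a a); rewrite orbb. Qed.

Lemma fbump_ge0 x : 0 <= fbump eps x.
Proof.
rewrite /fbump; case: ifP => // /negbT; rewrite -ltNge ltr_norml => /andP[h1 h2].
case: ifP => _; first by apply: divr_ge0; [lra | exact: ltW].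
case: ifP => _ //; apply: divr_ge0; [lra | exact: ltW].
Qed.

Lemma mfun_ge v h t h' : t <= mfun tau eps v h t h'.
Proof.
rewrite /mfun; case: ifP => // ht.
rewrite lerDr; apply: mulr_ge0; last exact: fbump_ge0.
rewrite le_min subr_ge0 ht /=; apply: divr_ge0 => //; exact: ltW.
Qed.

Definition lex (tk : V -> R -> R) (v w : V) :=
  (tk v (phi v) < tk w (phi w)) ||
  ((tk v (phi v) == tk w (phi w)) && le v w).

Lemma lex_exists tk (s : seq V) : s != [::] ->
  exists2 x, x \in s & forall y, y \in s -> lex tk x y.
Proof.
elim: s => // a s IH _.
case: (eqVneq s [::]) => [->|sn].
  exists a; first by rewrite inE eqxx.
  move=> y; rewrite inE => /eqP ->; by rewrite /lex eqxx ltxx lerefl.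
have [x xs Hx] := IH sn.
have lexT : forall a b c, lex tk a b -> lex tk b c -> lex tk a c.
  move=> p q r; rewrite /lex => /orP[h1|/andP[/eqP h1 h2]] /orP[h3|/andP[/eqP h3 h4]].
  - by rewrite (lt_trans h1 h3).
  - by rewrite -h3 h1.
  - by rewrite h1 h3.
  - by rewrite h1 h3 eqxx (leT _ _ _ h2 h4) orbT.
case H: (lex tk a x).
  exists a; first by rewrite inE eqxx.
  move=> y; rewrite inE => /orP[/eqP ->|ys]; last exact: lexT H (Hx y ys).
  by rewrite /lex eqxx ltxx lerefl.
exists x; first by rewrite inE xs orbT.
move=> y; rewrite inE => /orP[/eqP ->|ys]; last exact: Hx.
move: H; rewrite /lex; case: (ltgtP (tk a (phi a)) (tk x (phi x))) => //= h Hax.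
  case/orP: (leTot a x) => // h2; by move: Hax; rewrite h2 ?andbT ?orbT.
Qed.

Lemma select_some tk P p : select le phi tk P = Some p ->
  p \notin P /\ forall w, w \notin P -> tk p (phi p) <= tk w (phi w).
Proof.
rewrite /select; case: pickP => // x /andP[xP /forallP H] [<-]; split => // w wP.
by move: (H w); rewrite wP /= => /orP[/ltW|/andP[/eqP->]].
Qed.

Lemma select_none tk P : select le phi tk P = None -> forall v, v \in P.
Proof.
rewrite /select; case: pickP => // H _ v; apply/negPn/negP => vP.
have ne : [seq w <- enum V | w \notin P] != [::].
  apply/eqP => E; have := mem_filter (fun w => w \notin P) v (enum V).
  by rewrite E mem_enum vP.
have [x xs Hx] := @lex_exists tk _ ne.
move: xs; rewrite mem_filter => /andP[xP _].
move: (H x); rewrite xP /=; move/negbT/negP; apply; apply/forallP => w.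
apply/implyP => wP; apply: Hx; by rewrite mem_filter wP mem_enum.
Qed.

Definition Inv (st : alg_state R V) :=
  uniq (chosen st) /\ size (svals st) = size (chosen st) /\
   (forall v h, 0 <= tauf st v h <= tau v) /\
   (forall v0 i, (i < size (svals st))%N ->
       0 <= nth 0 (svals st) i <= tau (nth v0 (chosen st) i)) /\
   (forall i, (i.+1 < size (svals st))%N ->
       nth 0 (svals st) i <= nth 0 (svals st) i.+1) /\
   (forall x v, x \in svals st -> v \notin chosen st -> x <= tauf st v (phi v)).

Let stepf := step e tau eps le phi.

Lemma step_mono st v h : tauf (stepf st) v h <= tauf st v h.
Proof.
rewrite /stepf /step; case: select => //= p.
by case: ifP => // _; rewrite ge_min lexx.
Qed.

Lemma Inv_step st : Inv st -> Inv (stepf st).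
Proof.
move=> [U [S [T [N [M F]]]]]; rewrite /stepf /step.
case E: select => [p|] //=.
have [pP pmin] := select_some _ _ _ E.
set s := tauf st p (phi p).
have s0 : 0 <= s <= tau p by apply: T.
have news : forall v, v \notin rcons (chosen st) p ->
   s <= (if (v \in rcons (chosen st) p) || ~~ e v p then tauf st v (phi v)
         else Num.min (tauf st v (phi v)) (mfun tau eps v (phi p) s (phi v))).
  move=> v; rewrite mem_rcons inE negb_or => /andP[vp vP].
  rewrite (negbTE vp) (negbTE vP) /=.
  case: ifP => _; first exact: pmin.
  by rewrite le_min pmin //= mfun_ge.
have xs : forall x, x \in svals st -> x <= s by move=> x xin; apply: F.
split; [|split; [|split; [|split; [|split]]]].
- by rewrite rcons_uniq pP U.
- by rewrite !size_rcons S.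
- move=> v h /=; case: ifP => _; first exact: T.
  have /andP[t0 t1] := T v h.
  rewrite le_min t0 ge_min t1 /=; rewrite andbT; apply: (le_trans _ (mfun_ge _ _ _ _)).
  by case/andP: s0.
- move=> v0 i; rewrite size_rcons ltnS leq_eqVlt => /orP[/eqP ->|hi].
    by rewrite !nth_rcons S ltnn eqxx.
  by rewrite !nth_rcons -S hi; apply: N.
- move=> i; rewrite size_rcons ltnS leq_eqVlt => /orP[/eqP ei|hi].
    rewrite !nth_rcons -ei ltnn eqxx leqnn; apply: xs; apply: mem_nth; by rewrite -ei.
  by rewrite !nth_rcons hi (ltnW hi); apply: M.
- move=> x v; rewrite mem_rcons inE => /orP[/eqP ->|xin] vn; first exact: news.
  exact: le_trans (xs _ xin) (news _ vn).
Qed.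

Lemma Inv_init : Inv (init_state tau).
Proof. by do 2!split => //; split => //= v h; rewrite lexx tau_ge0. Qed.

Lemma Inv_iter k : Inv (iter k stepf (init_state tau)).
Proof. elim: k => [|k IH] /=; [exact: Inv_init | exact: Inv_step]. Qed.

Lemma size_iter k : (k <= #|V|)%N -> size (chosen (iter k stepf (init_state tau))) = k.
Proof.
elim: k => [|k IH] //= hk.
have {}IH := IH (ltnW hk).
have [U _] := Inv_iter k.
rewrite {1}/stepf /step; case E: select => [p|] /=; first by rewrite size_rcons IH.
have all := select_none _ _ E.
have := uniq_leq_size (enum_uniq V) (fun x _ => all x).
by rewrite -cardT IH leqNgt hk.
Qed.

End Helpers.

Theorem lemma2p1 (R : realFieldType) (V : finType) (e : rel V) (tau : V -> R)
  (eps : R) (le : rel V) (phi : V -> R)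
  (e_sym : symmetric e) (e_irr : irreflexive e)
  (e_conn : forall x y : V, connect e x y)
  (tau_ge0 : forall v, 0 <= tau v)
  (eps_gt0 : 0 < eps) (eps_le : eps <= 1 / 2)
  (le_anti : antisymmetric le) (le_trans : transitive le) (le_total : total le) :
  let n := #|V| in
  let tk := tau_k e tau eps le phi in
  let s := s_k e tau eps le phi in
     perm_eq (chosen (final_state e tau eps le phi)) (enum V) /\
      size (svals (final_state e tau eps le phi)) = n /\
      (forall v h, tk 1%N v h = tau v) /\
      (forall (k : nat) v h, (1 <= k < n)%N -> tk k.+1 v h <= tk k v h) /\
      (forall (k : nat) v h, (1 <= k <= n)%N -> 0 <= tk k v h) /\
      (forall (v0 : V) (k : nat), (1 <= k <= n)%N ->
          0 <= s k <= tau (P_k e tau eps le phi v0 k)) /\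
      (forall k : nat, (1 <= k < n)%N -> s k <= s k.+1) /\
      (forall v : V,
          0 <= Tplus e tau eps le phi v - phi v
       /\ Tplus e tau eps le phi v - phi v = phi v - Tminus e tau eps le phi v
       /\ Tplus e tau eps le phi v - phi v <= tau v).
Proof.
move=> n tk s.
have [U [S [T [N [M F]]]]] := Inv_iter _ _ e tau eps le phi tau_ge0 eps_gt0 #|V|.
have SZ := size_iter _ _ e tau eps le phi tau_ge0 eps_gt0 le_trans le_total #|V| (leqnn #|V|).
rewrite /final_state.
have PE : perm_eq (chosen (iter #|V| (step e tau eps le phi) (init_state tau))) (enum V).
  have hsz : (size (enum V) <= size (chosen (iter #|V| (step e tau eps le phi) (init_state tau))))%N.
    by rewrite SZ -cardT.
  have [_ eqs] := uniq_min_size U (fun x _ => mem_enum V x) hsz.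
  by apply: uniq_perm => //; exact: enum_uniq.
have SS : size (svals (iter #|V| (step e tau eps le phi) (init_state tau))) = #|V|.
  by rewrite S SZ.
split => //; split => //; split => //.
split.
  move=> [|k] v h // _; rewrite /tk /tau_k /=; exact: step_mono.
split.
  move=> k v h _; rewrite /tk /tau_k.
  by have [_ [_ [T' _]]] := Inv_iter _ _ e tau eps le phi tau_ge0 eps_gt0 k.-1;
     case/andP: (T' v h).
split.
  move=> v0 [|k] // /andP[_ hk]; rewrite /s /s_k /P_k /final_state /=.
  by apply: N; rewrite SS.
split.
  move=> [|k] // /andP[_ hk]; rewrite /s /s_k /=; apply: M; by rewrite SS.
move=> v; rewrite /Tminus /Tplus /final_state.
have vin : v \in chosen (iter #|V| (step e tau eps le phi) (init_state tau)).
  by rewrite (perm_mem PE) mem_enum.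
have := N v (index v (chosen (iter #|V| (step e tau eps le phi) (init_state tau)))).
rewrite nth_index // S index_mem => /(_ vin) /andP[h1 h2].
split; first lra. split; lra.
Qed.
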